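(* Let $X$ be a Banach space and let $D,E\subseteq X^*$ be norming spaces induced by projectional skeletons in $X$. If $D\cap E$ is total (i.e. separates the points of $X$), then $D=E$.
   Context: A projectional skeleton in $X$ is a family $\mathfrak s=(P_s)_{s\in\Gamma}$ of bounded linear projections on $X$ indexed by a directed poset $\Gamma$ such that: $X=\bigcup_sP_sX$ and each $P_sX$ is separable; $s\leqslant t\Rightarrow P_s=P_s\circ P_t=P_t\circ P_s$; for $s_0<s_1<\dots$ in $\Gamma$, $t=\sup_ns_n$ exists in $\Gamma$ and $P_tX=\overline{\bigcup_nP_{s_n}X}$; and $\sup_s\|P_s\|<\infty$. The norming space induced by $\mathfrak s$ is $D(\mathfrak s)=\bigcup_{s\in\Gamma}P_s^*X^*$. *)

(* Defs.v *)
From HB Require Import structures.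
From mathcomp Require Import all_boot all_order all_algebra.
From mathcomp Require Import all_classical all_reals all_analysis.
Set Implicit Arguments. Unset Strict Implicit. Unset Printing Implicit Defensive.
Import Order.TTheory GRing.Theory Num.Theory.
Import numFieldNormedType.Exports.
Local Open Scope classical_set_scope.
Local Open Scope ring_scope.

Definition separable_set {T : topologicalType} (A : set T) : Prop :=
  exists S : set T, countable S /\ S `<=` A /\ A `<=` closure S.

Definition dual_elem {R : realType} {X : normedModType R} (f : X -> R^o) : Prop :=
  linear f /\ continuous f.

Definition bounded_linear_projection {R : realType} {X : normedModType R}
  (P : X -> X) : Prop :=
  linear P /\ continuous P /\ (forall x, P (P x) = P x).

Definition is_sup_seq {d : Order.disp_t} {G : porderType d} (s : nat -> G) (t : G) : Prop :=
  (forall n, (s n <= t)%O) /\ (forall u, (forall n, (s n <= u)%O) -> (t <= u)%O).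

Definition projectional_skeleton {R : realType} {X : normedModType R}
  {d : Order.disp_t} (G : porderType d) (P : G -> X -> X) : Prop :=
  (forall s t : G, exists u, (s <= u)%O /\ (t <= u)%O) /\
      (forall s, bounded_linear_projection (P s)) /\
      (forall x : X, exists s, range (P s) x) /\
      (forall s, separable_set (range (P s))) /\
      (forall s t, (s <= t)%O -> P s = P s \o P t /\ P s = P t \o P s) /\
      (forall sq : nat -> G, (forall n, (sq n < sq n.+1)%O) ->
         exists t, is_sup_seq sq t /\
           range (P t) = closure (\bigcup_n range (P (sq n)))) /\
      (exists C : R, forall s x, `|P s x| <= C * `|x|).

(* The norming space D(s) = \bigcup_s P_s^* X^* induced by the skeleton. *)
Definition induced_norming_space {R : realType} {X : normedModType R}
  {d : Order.disp_t} {G : porderType d} (P : G -> X -> X) : set (X -> R^o) :=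
  [set f | exists s : G, exists g : X -> R^o, dual_elem g /\ f = g \o P s].

Definition total_set {R : realType} {X : normedModType R} (D : set (X -> R^o)) : Prop :=
  forall x : X, (forall f, D f -> f x = 0) -> x = 0.

(* Main.v *)
Require Import Defs.
From HB Require Import structures.
From mathcomp Require Import all_boot all_order all_algebra.
From mathcomp Require Import all_classical all_reals all_analysis.
From Stdlib Require Import Lia Cantor.
Import Order.TTheory GRing.Theory Num.Theory.
Import numFieldNormedType.Exports.
Local Open Scope classical_set_scope.
Local Open Scope ring_scope.

Section Aux.
Variables (R : realType) (X : normedModType R).

Lemma closure_norm (A : set X) x : closure A x ->
  forall e, 0 < e -> exists y, A y /\ `|x - y| < e.
Proof.
move=> cl e e0; have [y [Ay bxy]] := cl _ (nbhsx_ballx x e e0).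
by exists y; split=> //; move: bxy; rewrite -ball_normE.
Qed.

Lemma lin_sub (Y : lmodType R) (f : X -> Y) : linear f ->
  forall a b, f (a - b) = f a - f b.
Proof.
move=> Hf a b; have := Hf (-1) b a; rewrite !scaleN1r.
by rewrite [- b + a]addrC [- f b + f a]addrC.
Qed.

Lemma lin_0 (Y : lmodType R) (f : X -> Y) : linear f -> f 0 = 0.
Proof. by move=> Hf; have := lin_sub _ _ Hf 0 0; rewrite subrr => ->; rewrite subrr. Qed.

Lemma archi_k (e : R) : 0 < e -> exists k : nat, k.+1%:R^-1 < e.
Proof.
move=> e0; have := near_infty_natSinv_lt (PosNum e0).
move=> [N _ HN]; exists N; by apply: HN => /=.
Qed.
End Aux.
Arguments closure_norm {R X A x}.
Arguments lin_sub {R X Y f}.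
Arguments lin_0 {R X Y f}.
Lemma enum_countable (T : Type) (S : set T) : countable S -> S !=set0 ->
  exists e : nat -> T, (forall j, S (e j)) /\ S `<=` range e.
Proof.
move=> /pfcard_geP [->|[f]] ; first by case.
move=> _; exists f; split.
  move=> j; apply: funS; done.
move=> x Sx.
have := @surj _ _ _ _ f x Sx.
move=> [j _ <-]; by exists j.
Qed.
Arguments enum_countable {T S}.

Section Skel.
Variables (R : realType) (X : normedModType R) (d : Order.disp_t) (G : porderType d)
  (P : G -> X -> X).
Hypothesis HP : projectional_skeleton P.

Lemma sk_dir (s t : G) : exists u, (s <= u)%O /\ (t <= u)%O.
Proof. by case: HP => H _; apply: H. Qed.

Lemma sk_lin s : linear (P s).
Proof. by case: HP => _ [H _]; case: (H s). Qed.

Lemma sk_cont s : continuous (P s).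
Proof. by case: HP => _ [H _]; case: (H s) => _ []. Qed.

Lemma sk_cover x : exists s, range (P s) x.
Proof. by case: HP => _ [_ [H _]]. Qed.

Lemma sk_sep s : separable_set (range (P s)).
Proof. by case: HP => _ [_ [_ [H _]]]. Qed.

Lemma sk_comp {s t} : (s <= t)%O -> P s = P s \o P t /\ P s = P t \o P s.
Proof. by case: HP => _ [_ [_ [_ [H _]]]]; apply: H. Qed.

Lemma sk_chain (sq : nat -> G) : (forall n, (sq n < sq n.+1)%O) ->
  exists t, is_sup_seq sq t /\ range (P t) = closure (\bigcup_n range (P (sq n))).
Proof. by case: HP => _ [_ [_ [_ [_ [H _]]]]]; apply: H. Qed.

Lemma sk_bound : exists C : R, forall s x, `|P s x| <= C * `|x|.
Proof. by case: HP => _ [_ [_ [_ [_ [_ H]]]]]. Qed.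

Lemma sk_fix {s y} : range (P s) y -> P s y = y.
Proof.
case=> w _ <-; case: HP => _ [H _]; case: (H s) => _ [_ ->] //.
Qed.

Lemma sk_mono {s t} : (s <= t)%O -> range (P s) `<=` range (P t).
Proof.
move=> st y [w _ <-]; have [_ H2] := sk_comp st.
by exists (P s w) => //; rewrite {2}H2.
Qed.

Lemma sk_closed s : closure (range (P s)) `<=` range (P s).
Proof.
move=> x clx; exists x => //.
have [C HC] := sk_bound.
suff : `|x - P s x| <= 0.
  by rewrite normr_le0 subr_eq0 => /eqP <-.
apply/unstable.ler_gtP => z z0.
have C1 : 0 < 1 + `|C| by rewrite ltr_pwDl.
have e0 : 0 < z / (1 + `|C|) by rewrite divr_gt0.
have [y [ry hy]] := closure_norm clx _ e0.
have Py := sk_fix ry.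
have -> : x - P s x = (x - y) + P s (y - x).
  by rewrite (lin_sub (sk_lin s)) Py addrA subrK.
apply: (le_trans (ler_normD _ _)).
have h1 : `|P s (y - x)| <= `|C| * (z / (1 + `|C|)).
  apply: (le_trans (HC s _)).
  apply: (le_trans (ler_norm _)); rewrite normrM normr_id.
  apply: ler_wpM2l => //; rewrite distrC; exact: ltW.
apply: (le_trans (lerD (ltW hy) h1)).
by rewrite -{1}(mul1r (z / _)) -mulrDl mulrC mulfVK // gt_eqF.
Qed.

Lemma sk_elem : exists s : G, True.
Proof. by have [s _] := sk_cover 0; exists s. Qed.

Lemma sk_enum s : exists e : nat -> X,
  (forall j, range (P s) (e j)) /\ range (P s) `<=` closure (range e).
Proof.
have [S [cS [SP PS]]] := sk_sep s.
have S0 : S !=set0.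
  have r0 : range (P s) 0 by exists 0 => //; exact: lin_0 (sk_lin s).
  have [y [Sy _]] := closure_norm (PS _ r0) _ ltr01.
  by exists y.
have [e [eS Se]] := enum_countable cS S0.
exists e; split; first by move=> j; apply: SP.
by move=> x /PS; apply: closureS.
Qed.

Lemma sk_monoN {c : nat -> G} : (forall n, (c n <= c n.+1)%O) ->
  forall n m, (n <= m)%N -> (c n <= c m)%O.
Proof.
move=> Hc n m /subnK <-; elim: (m - n)%N => [|k IH]; first by rewrite add0n.
by rewrite addSn; apply: le_trans IH (Hc _).
Qed.

Lemma sk_sup (c : nat -> G) : (forall n, (c n <= c n.+1)%O) ->
  exists t, (forall n, (c n <= t)%O) /\
    range (P t) = closure (\bigcup_n range (P (c n))).
Proof.
move=> Hc; have mono := sk_monoN Hc.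
case: (pselect (exists N, forall m, (N <= m)%N -> c m = c N)) => [[N HN]|Hno].
  have cle : forall n, (c n <= c N)%O.
    move=> n; case: (leqP n N) => h; first exact: mono.
    by rewrite HN // ltnW.
  exists (c N); split => //.
  have -> : \bigcup_n range (P (c n)) = range (P (c N)).
    rewrite eqEsubset; split.
      by move=> x [n _ hx]; apply: sk_mono (cle n) _ hx.
    by move=> x hx; exists N.
  apply/closure_id; exact: sk_closed.
have H' : forall N, exists m, (N < m)%N /\ (c N < c m)%O.
  move=> N; apply: contrapT => Hn; apply: Hno; exists N => m hm.
  case: (eqVneq (c m) (c N)) => // hne; exfalso; apply: Hn.
  exists m; split; last by rewrite lt_neqAle eq_sym hne mono.
  by rewrite ltn_neqAle hm andbT; apply/eqP => E; move: hne; rewrite E eqxx.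
have [nx Hnx] := choice H'.
pose phi k := iter k nx 0%N.
have phiS k : phi k.+1 = nx (phi k) by [].
have phik k : (k <= phi k)%N.
  elim: k => // k IH; rewrite phiS; have [h _] := Hnx (phi k).
  exact: leq_ltn_trans IH h.
have [t [[tub _] teq]] := @sk_chain (fun k => c (phi k)) (fun k => (Hnx (phi k)).2).
exists t; split.
  by move=> n; apply: le_trans (mono _ _ (phik n)) (tub n).
rewrite teq; congr closure; rewrite eqEsubset; split.
  by move=> x [k _ hx]; exists (phi k).
move=> x [n _ hx]; exists n => //; exact: sk_mono (mono _ _ (phik n)) _ hx.
Qed.

Lemma sk_induced_fix f : induced_norming_space P f ->
  exists u, forall v, (u <= v)%O -> forall x, f (P v x) = f x.
Proof.
move=> [u [g [_ ->]]]; exists u => v uv x /=.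
have [H1 _] := sk_comp uv; by rewrite {2}H1.
Qed.

Lemma sk_induced_dual f : induced_norming_space P f -> dual_elem f.
Proof.
move=> [u [g [[gl gc] ->]]]; split.
  by move=> a x y /=; rewrite (sk_lin u) gl.
by move=> x; apply: continuous_comp; [exact: sk_cont | exact: gc].
Qed.
End Skel.

Arguments sk_dir {R X d G P} HP s t.
Arguments sk_lin {R X d G P} HP s.
Arguments sk_cont {R X d G P} HP s.
Arguments sk_cover {R X d G P} HP x.
Arguments sk_comp {R X d G P} HP {s t}.
Arguments sk_fix {R X d G P} HP {s y}.
Arguments sk_mono {R X d G P} HP {s t}.
Arguments sk_closed {R X d G P} HP s.
Arguments sk_elem {R X d G P} HP.
Arguments sk_enum {R X d G P} HP s.
Arguments sk_sup {R X d G P} HP c.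
Arguments sk_induced_fix {R X d G P} HP {f}.
Arguments sk_induced_dual {R X d G P} HP {f}.

Lemma absorb (R : realType) (X : normedModType R)
  (d1 : Order.disp_t) (G1 : porderType d1) (P1 : G1 -> X -> X)
  (d2 : Order.disp_t) (G2 : porderType d2) (P2 : G2 -> X -> X) :
  projectional_skeleton P1 -> projectional_skeleton P2 ->
  forall t : G2, exists s : G1, range (P2 t) `<=` range (P1 s).
Proof.
move=> HP1 HP2 t.
have [e [_ He]] := sk_enum HP2 t.
have [v Hv] := choice (fun j => sk_cover HP1 (e j)).
have [up Hup] := choice (fun p : G1 * G1 => sk_dir HP1 p.1 p.2).
pose c := fix c n := if n is n'.+1 then up (c n', v n) else v 0%N.
have Hc : forall n, (c n <= c n.+1)%O by move=> n; exact: (Hup (c n, v n.+1)).1.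
have vc : forall n, (v n <= c n)%O by case=> [|n] //=; exact: (Hup (c n, v n.+1)).2.
have [s [sub _]] := sk_sup HP1 c Hc.
exists s => x /He.
have cl : closure (range e) `<=` closure (range (P1 s)).
  apply: closureS => _ [j _ <-]; exact: (sk_mono HP1 (le_trans (vc j) (sub j)) _ (Hv j)).
by move=> /cl /(sk_closed HP1 s).
Qed.
Arguments absorb {R X d1 G1 P1 d2 G2 P2}.

Lemma incl (R : realType) (X : normedModType R)
  (d1 : Order.disp_t) (G1 : porderType d1) (P1 : G1 -> X -> X)
  (d2 : Order.disp_t) (G2 : porderType d2) (P2 : G2 -> X -> X) :
  projectional_skeleton P1 -> projectional_skeleton P2 ->
  total_set (induced_norming_space P1 `&` induced_norming_space P2) ->
  induced_norming_space P1 `<=` induced_norming_space P2.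
Proof.
move=> HP1 HP2 Htot xs Dxs.
have [u0 Hu0] := sk_induced_fix HP1 Dxs.
have [up1 Hup1] := choice (fun p : G1 * G1 => sk_dir HP1 p.1 p.2).
have [up2 Hup2] := choice (fun p : G2 * G2 => sk_dir HP2 p.1 p.2).
have [ab12 Hab12] := choice (absorb HP1 HP2).
have [ab21 Hab21] := choice (absorb HP2 HP1).
have [en Hen] := choice (sk_enum HP1).
pose DE := induced_norming_space P1 `&` induced_norming_space P2.
pose NZ (f : X -> R^o) (q : X) (k : nat) :=
  forall w, `|q - w| < k.+1%:R^-1 -> f w <> 0.
have [g1 _] := sk_elem HP1.
have [g2 _] := sk_elem HP2.
have HW : forall qk : X * nat, exists w : G1 * G2 * (X -> R^o),
   (exists f, DE f /\ NZ f qk.1 qk.2) ->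
   [/\ NZ w.2 qk.1 qk.2, (forall a b, w.2 (a - b) = w.2 a - w.2 b),
       (forall v, (w.1.1 <= v)%O -> forall x, w.2 (P1 v x) = w.2 x) &
       (forall v, (w.1.2 <= v)%O -> forall x, w.2 (P2 v x) = w.2 x)].
  move=> [q k]; case: (pselect (exists f, DE f /\ NZ f q k)) => [[f [[D1 D2] Hnz]]|hn].
    have [u1 Hu1] := sk_induced_fix HP1 D1.
    have [u2 Hu2] := sk_induced_fix HP2 D2.
    exists (u1, u2, f) => _; split => //.
    exact: lin_sub (sk_induced_dual HP1 D1).1.
  by exists (g1, g2, fun _ => 0) => /hn.
have [W HWs] := choice HW.
pose dec n := ((Cantor.of_nat n).1, (Cantor.of_nat (Cantor.of_nat n).2).1,
  (Cantor.of_nat (Cantor.of_nat n).2).2).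
have Hdec : forall m i k, exists n, (m <= n)%N /\ dec n = (m, i, k).
  move=> m i k; exists (Cantor.to_nat (m, Cantor.to_nat (i, k))); split.
    apply/ssrnat.leP; have := Cantor.to_nat_non_decreasing m (Cantor.to_nat (i,k)); lia.
  by rewrite /dec !Cantor.cancel_of_to.
pose stp (n : nat) (st : (nat -> G1) * G2) :=
  let q := en (st.1 (dec n).1.1) (dec n).1.2 in
  let w := W (q, (dec n).2) in
  let s' := up1 (up1 (st.1 n, w.1.1), ab12 st.2) in
  let t' := up2 (up2 (st.2, w.1.2), ab21 s') in
  ((fun j => if (j <= n)%N then st.1 j else s'), t').
pose sq := fix sq n := if n is n'.+1 then stp n' (sq n') else ((fun _ => u0), ab21 u0).
pose ss n := (sq n).1 n.
pose tt n := (sq n).2.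
pose Wn n := W (en ((sq n).1 (dec n).1.1) (dec n).1.2, (dec n).2).
have ssS n : ss n.+1 = up1 (up1 (ss n, (Wn n).1.1), ab12 (tt n)) by rewrite /ss /= ltnn.
have ttS n : tt n.+1 = up2 (up2 (tt n, (Wn n).1.2), ab21 (ss n.+1)).
  by rewrite ssS.
have ssle n : (ss n <= ss n.+1)%O.
  rewrite ssS; exact: le_trans (Hup1 (ss n, (Wn n).1.1)).1
    (Hup1 (up1 (ss n, (Wn n).1.1), ab12 (tt n))).1.
have W1le n : ((Wn n).1.1 <= ss n.+1)%O.
  rewrite ssS; exact: le_trans (Hup1 (ss n, (Wn n).1.1)).2
    (Hup1 (up1 (ss n, (Wn n).1.1), ab12 (tt n))).1.
have r21 n : range (P2 (tt n)) `<=` range (P1 (ss n.+1)).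
  rewrite ssS; apply: subset_trans (Hab12 (tt n)) _.
  apply: (sk_mono HP1); exact: (Hup1 (up1 (ss n, (Wn n).1.1), ab12 (tt n))).2.
have ttle n : (tt n <= tt n.+1)%O.
  rewrite ttS; exact: le_trans (Hup2 (tt n, (Wn n).1.2)).1
    (Hup2 (up2 (tt n, (Wn n).1.2), ab21 (ss n.+1))).1.
have W2le n : ((Wn n).1.2 <= tt n.+1)%O.
  rewrite ttS; exact: le_trans (Hup2 (tt n, (Wn n).1.2)).2
    (Hup2 (up2 (tt n, (Wn n).1.2), ab21 (ss n.+1))).1.
have r12 n : range (P1 (ss n)) `<=` range (P2 (tt n)).
  case: n => [|n]; first exact: Hab21 u0.
  rewrite ttS; apply: subset_trans (Hab21 (ss n.+1)) _.
  apply: (sk_mono HP2); exact: (Hup2 (up2 (tt n, (Wn n).1.2), ab21 (ss n.+1))).2.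
have hist n j : (j <= n)%N -> (sq n).1 j = ss j.
  elim: n j => [|n IH] j hj.
    by move: hj; rewrite leqn0 => /eqP ->.
  rewrite /=; case: leqP => h; first exact: IH.
  have E : j = n.+1 by apply/eqP; rewrite eqn_leq hj h.
  by subst j; rewrite /ss /= ltnn.
have [ss_ [ssub sseq]] := sk_sup HP1 ss ssle.
have [tt_ [tsub tseq]] := sk_sup HP2 tt ttle.
have Ueq : \bigcup_n range (P1 (ss n)) = \bigcup_n range (P2 (tt n)).
  rewrite eqEsubset; split => x [n _ hx].
    by exists n => //; exact: r12.
  by exists n.+1 => //; exact: r21.
have req : range (P1 ss_) = range (P2 tt_) by rewrite sseq tseq Ueq.
have Peq : forall x, P1 ss_ x = P2 tt_ x.
  move=> x; apply/eqP; rewrite -subr_eq0; apply/eqP.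
  set z := _ - _.
  have rz : range (P1 ss_) z.
    have : range (P1 ss_) (P2 tt_ x) by rewrite req; exists x.
    case=> w _ hw; exists (x - w) => //; by rewrite (lin_sub (sk_lin HP1 ss_)) hw.
  apply/eqP; apply: contraT => hz.
  have [f Hf] : exists f, ~ (DE f -> f z = 0).
    apply/existsNP => H; move/negP: hz; apply; by rewrite (Htot z H).
  move/not_implyP: Hf => [Df fz0].
  have [fl fc] := sk_induced_dual HP1 Df.1.
  have fz : 0 < `|f z| by rewrite normr_gt0; apply/eqP.
  have := cvgr_dist_lt _ _ (fc z) _ fz.
  move=> Hn; have [e /= e0 He] := (nbhs_ballP _ _).1 (Hn (nbhs_filter z)).
  have Hnz : forall w, `|z - w| < e -> f w <> 0.
    move=> w hw fw0; have : ball z e w by rewrite -ball_normE.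
    by move/He; rewrite /= fw0 subr0 ltxx.
  have [k hk] := archi_k _ _ (divr_gt0 e0 (ltr0n _ 2)).
  set r := k.+1%:R^-1 in hk.
  have r0 : 0 < r by rewrite invr_gt0 ltr0n.
  have r2 : 0 < r / 2 by rewrite divr_gt0 // ltr0n.
  move: rz; rewrite sseq => rz.
  have [y [[m _ hy] hzy]] := closure_norm rz _ r2.
  have [_ [[i _ <-] hyq]] := closure_norm ((Hen (ss m)).2 _ hy) _ r2.
  set q := en (ss m) i in hyq.
  have hzq : `|z - q| < r.
    apply: le_lt_trans (ler_distD y z q) _.
    by rewrite [X in _ < X]splitr; apply: ltrD.
  have NZf : NZ f q k.
    move=> w hw; apply: Hnz.
    apply: le_lt_trans (ler_distD q z w) _.
    rewrite [X in _ < X]splitr.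
    by apply: ltrD; apply: lt_trans hk.
  have [n [mn dn]] := Hdec m i k.
  have Weq : Wn n = W (q, k) by rewrite /Wn dn /= hist.
  have [F1 F2 F3 F4] := HWs (q, k) (ex_intro _ f (conj Df NZf)).
  have := F1 z; rewrite /= distrC => /(_ hzq) H; exfalso; apply: H.
  rewrite /z F2 F3 ?F4 ?subrr //.
    apply: le_trans (tsub n.+1); by rewrite -Weq.
  apply: le_trans (ssub n.+1); by rewrite -Weq.
exists tt_, xs; split; first by have := sk_induced_dual HP1 Dxs.
apply: funext => x /=; rewrite -Peq Hu0 //; exact: ssub 0%N.
Qed.

Theorem corollary4p11 (R : realType) (X : completeNormedModType R)
  (d1 : Order.disp_t) (G1 : porderType d1) (P1 : G1 -> X -> X)
  (d2 : Order.disp_t) (G2 : porderType d2) (P2 : G2 -> X -> X) :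
  projectional_skeleton P1 -> projectional_skeleton P2 ->
  total_set (induced_norming_space P1 `&` induced_norming_space P2) ->
  induced_norming_space P1 = induced_norming_space P2.
Proof.
move=> HP1 HP2 Htot; rewrite eqEsubset; split; first exact: incl.
by apply: incl => //; rewrite setIC.
Qed.
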